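(* There is an absolute constant $c>0$ such that for every $n\ge1$, every $\eta\in[n]=\{1,\dots,n\}$, and every comparison-based search algorithm (deterministic or randomized) which, given a predicted distribution $\hat p$ on $[n]$ and a target key $a\in\{a_1,\dots,a_n\}$ (with $a_1<\dots<a_n$), locates the index of $a$ using comparisons, there exists an instance $(p,\hat p)$ of distributions on $[n]$ with $H(p)=0$ and earth mover's distance between $p$ and $\hat p$ at most $\eta$ on which the algorithm's expected number of comparisons (over $a=a_i$ with probability $p_i$ and over its internal randomness) is at least $c\log\eta$.
   Context: All logarithms are base 2. $H(p)=-\sum_i p_i\log p_i$ is the entropy. The earth mover's distance between distributions $P,Q$ on $[n]$ is $\inf_{\gamma\in\Pi(P,Q)}\mathbb{E}_{(x,y)\sim\gamma}|x-y|$, with $\Pi(P,Q)$ the set of couplings of $P$ and $Q$. A comparison of the target $a$ with a key $a_j$ returns whether $a<a_j$, $a=a_j$ or $a>a_j$ and counts as one query. *)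

(* Defs.v *)
From HB Require Import structures.
From mathcomp Require Import all_boot all_order all_algebra.
From mathcomp Require Import all_classical all_reals.
From mathcomp Require Import ereal topology normedtype sequences exp.
From mathcomp Require Import Rstruct.
Set Implicit Arguments. Unset Strict Implicit. Unset Printing Implicit Defensive.
Import Order.TTheory GRing.Theory Num.Theory.
Local Open Scope classical_set_scope.
Local Open Scope ring_scope.

Section Defs.
Variable R : realType.

(* a probability distribution on [n], indexed by 'I_n = {0,...,n-1} *)
Definition is_dist (n : nat) (p : 'I_n -> R) : Prop :=
  (forall i, 0 <= p i) /\ \sum_(i < n) p i = 1.

Definition log2 (x : R) : R := ln x / ln 2.

Definition entropy (n : nat) (p : 'I_n -> R) : R :=
  - \sum_(i < n) (if p i == 0 then 0 else p i * log2 (p i)).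

Definition is_coupling (n : nat) (p q : 'I_n -> R) (g : 'I_n -> 'I_n -> R) : Prop :=
  (forall i j, 0 <= g i j) /\
  (forall i, \sum_(j < n) g i j = p i) /\
  (forall j, \sum_(i < n) g i j = q j).

Definition coupling_cost (n : nat) (g : 'I_n -> 'I_n -> R) : R :=
  \sum_(i < n) \sum_(j < n) g i j * `|(i : nat)%:R - (j : nat)%:R|.

Definition emd (n : nat) (p q : 'I_n -> R) : R :=
  inf [set x | exists g, is_coupling p q g /\ x = coupling_cost g].

End Defs.

(* Deterministic comparison-based search: a ternary comparison tree.
   A node CNode j tl te tg compares the target a with key a_j and continues in
   tl / te / tg according to a < a_j, a = a_j, a > a_j. *)
Inductive ctree (n : nat) : Type :=
| CLeaf of 'I_n
| CNode of 'I_n & ctree n & ctree n & ctree n.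

(* Running a tree on target a = a_i (keys sorted: a_i < a_j iff i < j).
   Returns the output index and the number of comparisons made. *)
Fixpoint run (n : nat) (t : ctree n) (i : 'I_n) : 'I_n * nat :=
  match t with
  | CLeaf k => (k, 0%N)
  | CNode j tl te tg =>
      let r := run (if (i < j)%N then tl else if i == j then te else tg) i in
      (r.1, r.2.+1)
  end.

Definition correct (n : nat) (t : ctree n) : Prop := forall i, (run t i).1 = i.

Definition ncomp (n : nat) (t : ctree n) (i : 'I_n) : nat := (run t i).2.

Section Rand.
Variable R : realType.
Local Open Scope ring_scope.

(* A randomized (correct) search algorithm for a fixed input prediction:
   a probability distribution over (the countable set of) correct
   deterministic comparison trees. Deterministic = point mass. *)
Record randalg (n : nat) := RandAlg {
  ra_w : nat -> R;
  ra_t : nat -> ctree n;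
  ra_w_ge0 : forall k, 0 <= ra_w k;
  ra_w_sum : (\sum_(k <oo) (ra_w k)%:E = 1)%E;
  ra_correct : forall k, correct (ra_t k)
}.

Definition expected_cost (n : nat) (A : randalg n) (p : 'I_n -> R) : \bar R :=
  (\sum_(k <oo) (ra_w A k * \sum_(i < n) p i * (ncomp (ra_t A k) i)%:R)%:E)%E.
End Rand.

(* Main.v *)
Require Import Defs.
From HB Require Import structures.
From mathcomp Require Import all_boot all_order all_algebra.
From mathcomp Require Import all_classical all_reals.
From mathcomp Require Import ereal topology normedtype sequences exp.
From mathcomp Require Import Rstruct.
From mathcomp.zify Require Import zify.
From mathcomp.algebra_tactics Require Import ring lra.
Import Order.TTheory GRing.Theory Num.Theory.
Set Implicit Arguments. Unset Strict Implicit.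

Lemma card_predU_le (T : finType) (A B : simpl_pred T) :
  #|[predU A & B]| <= #|A| + #|B|.
Proof. by rewrite -cardUI leq_addr. Qed.

Lemma count_le n (t : ctree n) m :
  #|[pred i | ((run t i).1 == i) && (ncomp t i <= m)]| <= 3 ^ m.
Proof.
elim: t m => [k|j tl IHl te IHe tg IHg] m.
  apply: (@leq_trans #|pred1 k|); last by rewrite card1 expn_gt0.
  apply: subset_leq_card; apply/fintype.subsetP => i; rewrite !inE /ncomp /=.
  by case/andP => /eqP ->.
case: m => [|m].
  apply: (@leq_trans #|@pred0 'I_n|); last by rewrite card0.
  apply: subset_leq_card; apply/fintype.subsetP => i; rewrite !inE /ncomp /=.
  by rewrite ltn0 andbF.
set Pl := [pred i | ((run tl i).1 == i) && (ncomp tl i <= m)].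
set Pe := [pred i | ((run te i).1 == i) && (ncomp te i <= m)].
set Pg := [pred i | ((run tg i).1 == i) && (ncomp tg i <= m)].
apply: (@leq_trans #|[predU Pl & [predU Pe & Pg]]|).
  apply: subset_leq_card; apply/fintype.subsetP => i; rewrite !inE /ncomp /= ltnS.
  by case: ifP => _; [|case: ifP => _] => ->; rewrite ?orbT.
apply: (leq_trans (card_predU_le Pl [predU Pe & Pg])).
apply: (leq_trans (leq_add (leqnn _) (card_predU_le Pe Pg))).
have hl : #|Pl| <= 3 ^ m := IHl m.
have he : #|Pe| <= 3 ^ m := IHe m.
have hg : #|Pg| <= 3 ^ m := IHg m.
rewrite expnS !mulSn mul0n addn0; apply: leq_add => //; exact: leq_add.
Qed.

Lemma card_lt n eta : eta <= n -> #|[pred i : 'I_n | (i : nat) < eta]| = eta.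
Proof.
move=> en; rewrite -sum1_card.
transitivity (\sum_(i < n | i < eta) 1)%N; first by apply: eq_bigl.
by rewrite -(big_ord_widen n (fun _ => 1%N) en) sum1_card card_ord.
Qed.

Lemma sum_lb n (t : ctree n) eta m : correct t -> eta <= n ->
  m.+1 * (eta - 3 ^ m) <= \sum_(i < n | (i : nat) < eta) ncomp t i.
Proof.
move=> ct en.
set B := [pred i : 'I_n | ncomp t i <= m].
have hB : #|B| <= 3 ^ m.
  suff -> : #|B| = #|[pred i | ((run t i).1 == i) && (ncomp t i <= m)]|.
    exact: count_le.
  by apply: eq_card => i; rewrite !inE ct eqxx.
set A := [pred i : 'I_n | (i : nat) < eta].
have hD : eta - 3 ^ m <= #|[predD A & B]|.
  rewrite leq_subLR -{1}(card_lt en) -(cardID B A) leq_add2r.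
  apply: leq_trans hB; apply: subset_leq_card; apply/fintype.subsetP => i.
  by rewrite !inE => /andP[].
apply: (leq_trans (leq_mul (leqnn m.+1) hD)).
rewrite mulnC -sum_nat_const [X in _ <= X](bigID B) /= addnC.
apply: (leq_trans _ (leq_addr _ _)).
rewrite big_mkcond [X in _ <= X]big_mkcond; apply: leq_sum => i _.
rewrite !inE; case: (i < eta); rewrite ?andbT ?andbF //.
by case: (leqP (ncomp t i) m).
Qed.

Local Open Scope ring_scope.

Lemma sum_delta n (i : 'I_n) (f : 'I_n -> Rdefinitions.R) :
  \sum_(j < n) (j == i)%:R * f j = f i.
Proof.
rewrite (bigD1 i) //= eqxx mul1r big1 ?addr0 // => j /negbTE ->.
by rewrite mul0r.
Qed.

Lemma sum_delta1 n (i : 'I_n) :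
  \sum_(j < n) ((j == i)%:R : Rdefinitions.R) = 1.
Proof.
rewrite -[RHS](sum_delta i (fun _ => 1)).
by apply: eq_bigr => j _; rewrite mulr1.
Qed.

Lemma is_dist_delta n (i : 'I_n) :
  is_dist (fun j => ((j == i)%:R : Rdefinitions.R)).
Proof. by split; [move=> j; rewrite ler0n | exact: sum_delta1]. Qed.

Lemma entropy_delta n (i : 'I_n) :
  entropy (fun j => ((j == i)%:R : Rdefinitions.R)) = 0.
Proof.
rewrite /entropy big1 ?oppr0 // => j _.
case: (j == i) => /=; last by rewrite eqxx.
by rewrite oner_eq0 mul1r /log2 ln1 mul0r.
Qed.

Lemma emd_delta n (i i0 : 'I_n) :
  emd (fun j => ((j == i)%:R : Rdefinitions.R)) (fun j => (j == i0)%:R)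
  <= `|(i : nat)%:R - (i0 : nat)%:R|.
Proof.
rewrite /emd.
set E := (X in inf X).
have hl : has_lbound E.
  exists 0 => x [g [[g0 _] ->]].
  apply: sumr_ge0 => a _; apply: sumr_ge0 => b _.
  by apply: mulr_ge0.
pose g (a b : 'I_n) : Rdefinitions.R := ((a == i) && (b == i0))%:R.
apply: (ge_inf hl); exists g; split; first split.
- by move=> a b; rewrite ler0n.
- split => a.
    case: (eqVneq a i) => [->|ai]; rewrite /g ?eqxx /=.
      exact: sum_delta1.
    by rewrite (negbTE ai) big1.
  case: (eqVneq a i0) => [->|ai]; rewrite /g ?eqxx /=.
    under eq_bigr do rewrite andbT.
    exact: sum_delta1.
  by rewrite (negbTE ai) big1 // => b _; rewrite andbF.
- apply/esym; rewrite /coupling_cost (bigD1 i) //= [X in _ + X]big1 ?addr0; last first.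
    move=> a ai; apply: big1 => b _; rewrite /g (negbTE ai) /=.
    by rewrite mul0r.
  rewrite -(sum_delta i0 (fun b => `|(i : nat)%:R - (b : nat)%:R|)).
  by apply: eq_bigr => b _; rewrite /g eqxx.
Qed.

Lemma log_bound (eta m : nat) : (0 < eta)%N -> (eta < 9 ^ m.+1)%N ->
  1 / 16 * log2 (eta%:R : Rdefinitions.R) <= m.+1%:R / 4.
Proof.
move=> e0 elt.
have ln2 : 0 < ln (2 : Rdefinitions.R) by rewrite ln_gt0 // ltr1n.
have h1 : ln (eta%:R : Rdefinitions.R) <= ln ((9 ^ m.+1)%:R).
  by rewrite ler_ln ?posrE ?ltr0n ?expn_gt0 // ler_nat ltnW.
have h2 : ln ((9 ^ m.+1)%:R : Rdefinitions.R) = ln 9 * m.+1%:R.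
  by rewrite natrX lnXn ?ltr0n // mulr_natr.
have h3 : ln (9 : Rdefinitions.R) <= ln 2 * 4.
  rewrite -[4]/(4%:R) mulr_natr -lnXn ?ltr0n //.
  by rewrite ler_ln ?posrE ?exprn_gt0 ?ltr0n // -natrX ler_nat.
have h4 : log2 (eta%:R : Rdefinitions.R) <= 4 * m.+1%:R.
  rewrite /log2 ler_pdivrMr //.
  apply: (le_trans h1); rewrite h2.
  have hm : (0 : Rdefinitions.R) <= m.+1%:R by rewrite ler0n.
  rewrite [X in _ <= X](_ : _ = ln 2 * 4 * m.+1%:R); last by rewrite mulrC mulrA.
  have H := ler_wpM2r hm h3; exact: H.
lra.
Qed.

Lemma ec_delta n (B : randalg Rdefinitions.R n) (i : 'I_n) :
  expected_cost B (fun j => ((j == i)%:R : Rdefinitions.R)) =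
  (\sum_(k <oo) (ra_w B k * (ncomp (ra_t B k) i)%:R)%:E)%E.
Proof.
rewrite /expected_cost; apply: eq_eseriesr => k _.
by rewrite sum_delta.
Qed.

Theorem theorem3p2 :
  exists c : Rdefinitions.R, 0 < c /\
  forall (n eta : nat), (1 <= n)%N -> (1 <= eta <= n)%N ->
  forall A : ('I_n -> Rdefinitions.R) -> randalg Rdefinitions.R n,
  exists (p phat : 'I_n -> Rdefinitions.R),
    [/\ is_dist p, is_dist phat, entropy p = 0,
        emd p phat <= eta%:R
      & ((c * log2 eta%:R)%:E <= expected_cost (A phat) p)%E].
Proof.
exists (1/16); split; first by lra.
move=> n eta n1 /andP[e1 en] A.
pose i0 : 'I_n := Ordinal n1.
pose phat := fun j : 'I_n => ((j == i0)%:R : Rdefinitions.R).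
suff [i [ilt hi]] : exists i : 'I_n, (i < eta)%N /\
   ((1/16 * log2 eta%:R)%:E <= expected_cost (A phat)
        (fun j => ((j == i)%:R : Rdefinitions.R)))%E.
  exists (fun j => (j == i)%:R), phat; split => //;
    [exact: is_dist_delta|exact: is_dist_delta|exact: entropy_delta|].
  apply: le_trans (emd_delta i i0) _.
  by rewrite /= subr0 ger0_norm ?ler0n // ler_nat ltnW.
set B := A phat.
case: (eqVneq eta 1%N) => [e_1|e2].
  exists i0; split; first by rewrite e_1.
  rewrite e_1 /log2 ln1 mul0r mulr0; apply: nneseries_ge0 => k _ _.
  rewrite lee_fin; apply: mulr_ge0; first exact: ra_w_ge0.
  by apply: sumr_ge0 => j _; apply: mulr_ge0; rewrite ?ler0n.
have e2' : (2 <= eta)%N by lia.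
apply: contrapT => hN.
have hlt : forall i : 'I_n, (i < eta)%N ->
    (expected_cost B (fun j => ((j == i)%:R : Rdefinitions.R)) <
     (1/16 * log2 eta%:R)%:E)%E.
  move=> i ilt; rewrite ltNge; apply/negP => hge; apply: hN; by exists i.
set m := trunc_log 9 eta.
have h9 : (9 ^ m <= eta)%N by apply: trunc_logP => //; lia.
have h9' : (eta < 9 ^ m.+1)%N by apply: trunc_log_ltn.
have h3gen : forall k, (9 ^ k <= eta)%N -> (2 * 3 ^ k <= eta)%N.
  case=> [|m'] h; first by rewrite expn0 muln1.
  apply: leq_trans h; rewrite (_ : 9 = 3 * 3)%N // expnMn leq_mul2r.
  apply/orP; right; rewrite expnS.
  have := expn_gt0 3 m'; lia.
have h3 := h3gen m h9.
have hY := log_bound (ltnW e2') h9'.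
have htree : forall k, (m.+1%:R * eta%:R <=
    2 * \sum_(i < n | (i < eta)%N) (ncomp (ra_t B k) i)%:R :> Rdefinitions.R).
  move=> k; have hs := @sum_lb _ _ eta m (ra_correct B k) en.
  rewrite -natr_sum -!natrM ler_nat.
  apply: (leq_trans _ (leq_mul (leqnn 2) hs)).
  rewrite mulnCA leq_mul2l; apply/orP; right; lia.
have hsum : ((m.+1%:R * eta%:R / 2)%:E <= \sum_(i < n | (i < eta)%N)
     expected_cost B (fun j => ((j == i)%:R : Rdefinitions.R)))%E.
  under eq_bigr => i _ do rewrite ec_delta.
  rewrite -nneseries_sum; last first.
    by move=> i k _; rewrite lee_fin mulr_ge0 ?ra_w_ge0 ?ler0n.
  rewrite -[X in (X <= _)%E]mule1 -(ra_w_sum B) -nneseriesZl; last first.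
    by move=> k _; rewrite lee_fin ra_w_ge0.
  apply: lee_nneseries.
    move=> k _ _; rewrite lee_fin mulr_ge0 ?ra_w_ge0 //.
  move=> k _; rewrite -EFinM sumEFin lee_fin -mulr_sumr mulrC.
  apply: ler_wpM2l; first exact: ra_w_ge0.
  have := htree k; lra.
have hup : (\sum_(i < n | (i < eta)%N)
     expected_cost B (fun j => ((j == i)%:R : Rdefinitions.R)) <=
     (eta%:R * (m.+1%:R / 4))%:E)%E.
  apply: (@le_trans _ _ (\sum_(i < n | (i < eta)%N) (m.+1%:R / 4)%:E)%E).
    apply: lee_sum => i ilt; apply: ltW; apply: lt_le_trans (hlt i ilt) _.
    by rewrite lee_fin.
  rewrite sumEFin lee_fin.
  rewrite (eq_bigl (fun i : 'I_n => i \in [pred i : 'I_n | ((i : nat) < eta)%N])) //.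
  by rewrite sumr_const (card_lt en) -[X in X <= _]mulr_natl.
have := le_trans hsum hup; rewrite lee_fin.
have -> : eta%:R * (m.+1%:R / 4) = m.+1%:R * eta%:R / 4 :> Rdefinitions.R.
  by ring.
have : (0 : Rdefinitions.R) < m.+1%:R * eta%:R.
  by rewrite mulr_gt0 ?ltr0n //; lia.
lra.
Qed.
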